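(* Let $\mathcal{X}$ be a Suslin space, $f_1,\dots,f_n\colon\mathcal{X}\to\mathbb{R}$ measurable, $c_1,\dots,c_n\in\mathbb{R}$, and $H:=\{\nu\in\mathcal{M}(\mathcal{X}):f_i\text{ is }\nu\text{-integrable and }\mathbb{E}_\nu[f_i]\le c_i,\ i=1,\dots,n\}$. Let $f\colon\mathcal{X}\to\mathbb{R}$ be semibounded and universally measurable. Then $F(\nu):=\mathbb{E}_{\widehat{\nu}}[f]$, $\nu\in H$, is measure affine on $H$.
   Context: $\widehat{\nu}$ is the completion of $\nu$; universally measurable means measurable w.r.t. the intersection of all completions of the Borel $\sigma$-algebra. $\Sigma(\operatorname{ext}H)$ is the smallest $\sigma$-algebra on the set of extreme points $\operatorname{ext}H$ making all evaluations $\nu\mapsto\nu(A)$, $A$ Borel, measurable. $F$ is measure affine on $H$ if, for every $\nu\in H$ and every probability measure $p$ on $\Sigma(\operatorname{ext}H)$ with $\nu(A)=\int_{\operatorname{ext}H}\nu'(A)\,dp(\nu')$ for all Borel $A$, $F$ is $p$-integrable and $F(\nu)=\int_{\operatorname{ext}H}F(\nu')\,dp(\nu')$. *)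

(* Defs.v *)
From HB Require Import structures.
From mathcomp Require Import all_boot all_order all_algebra.
From mathcomp Require Import all_classical all_reals all_analysis measurable_realfun.
Set Implicit Arguments. Unset Strict Implicit. Unset Printing Implicit Defensive.
Import Order.TTheory GRing.Theory Num.Theory.
Import numFieldNormedType.Exports.
Local Open Scope classical_set_scope.
Local Open Scope ring_scope.

Definition polish (R : realType) (P : completePseudoMetricType R) : Prop :=
  hausdorff_space P /\ exists D : set P, countable D /\ dense D.

Definition suslin (R : realType) (X : ptopologicalType) : Prop :=
  hausdorff_space X /\
  exists (P : completePseudoMetricType R) (g : P -> X),
    polish P /\ continuous g /\ (forall x : X, exists y : P, g y = x).

Definition borel (X : ptopologicalType) := g_sigma_algebraType (@open X).

Definition universally_measurable (R : realType) (X : ptopologicalType)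
    (A : set (borel X)) : Prop :=
  forall nu : probability (borel X) R,
    exists B C : set (borel X), [/\ measurable B, measurable C,
      B `<=` A, A `<=` C & nu (C `\` B) = 0%E].

Definition universally_measurable_fun (R : realType) (X : ptopologicalType)
    (f : borel X -> R) : Prop :=
  forall B : set R, measurable B -> universally_measurable R (f @^-1` B).

Definition semibounded (T : Type) (R : realType) (f : T -> R) : Prop :=
  (exists b : R, forall x, f x <= b) \/ (exists b : R, forall x, b <= f x).

Notation completion mu := (@completed_measure_extension _ _ _ mu).

Definition Hset (R : realType) (X : ptopologicalType) (n : nat)
    (fs : 'I_n -> borel X -> R) (c : 'I_n -> R) : set (probability (borel X) R) :=
  [set nu | forall i : 'I_n,
     nu.-integrable setT (fun x => (fs i x)%:E) /\
     (\int[nu]_x (fs i x)%:E <= (c i)%:E)%E].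

Definition ext (R : realType) (d : measure_display) (T : measurableType d)
    (H : set (probability T R)) : set (probability T R) :=
  [set nu | H nu /\
     forall (nu1 nu2 : probability T R) (t : R),
       H nu1 -> H nu2 -> 0 < t < 1 ->
       (forall A, measurable A -> nu A = (t%:E * nu1 A + (1 - t)%:E * nu2 A)%E) ->
       (forall A, measurable A -> nu1 A = nu A /\ nu2 A = nu A)].

(* The carrier ext H, as a type, pointed by a given element e0
   (pointedness is required by the library to build a measurable type). *)
Definition extT (R : realType) (d : measure_display) (T : measurableType d)
  (H : set (probability T R)) (e0 : {nu | ext H nu}) := {nu | ext H nu}.

Section extT_pointed.
Context (R : realType) (d : measure_display) (T : measurableType d)
  (H : set (probability T R)) (e0 : {nu | ext H nu}).
HB.instance Definition _ := gen_eqMixin (extT e0).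
HB.instance Definition _ := gen_choiceMixin (extT e0).
HB.instance Definition _ := isPointed.Build (extT e0) e0.
End extT_pointed.

Definition eval_system (R : realType) (d : measure_display) (T : measurableType d)
    (H : set (probability T R)) (e0 : {nu | ext H nu}) :
    set (set (extT e0)) :=
  \bigcup_(A in @measurable _ T)
     preimage_set_system setT (fun e : extT e0 => (sval e) A)
       (measurable : set (set (\bar R))).

Definition extH_space (R : realType) (d : measure_display) (T : measurableType d)
    (H : set (probability T R)) (e0 : {nu | ext H nu}) :=
  g_sigma_algebraType (@eval_system R d T H e0).

Definition p_integrable d (S : measurableType d) (R : realType)
    (p : probability S R) (F : S -> \bar R) : Prop :=
  @measurable_fun _ _ (caratheodory_type (p^*)%mu) (\bar R) setT F /\
  ((\int[completion p]_x (F^\+ x) < +oo)%E \/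
   (\int[completion p]_x (F^\- x) < +oo)%E).

Definition measure_affine (R : realType) (d : measure_display) (T : measurableType d)
    (H : set (probability T R)) (F : probability T R -> \bar R) : Prop :=
  forall nu : probability T R, H nu ->
  forall (e0 : {nu | ext H nu}) (p : probability (extH_space e0) R),
    (forall A, measurable A ->
       nu A = (\int[p]_e (sval e) A)%E) ->
    p_integrable p (fun e : extH_space e0 => F (sval e)) /\
    F nu = (\int[completion p]_e F (sval e))%E.

(* Main.v *)
Require Import Defs.
From HB Require Import structures.
From mathcomp Require Import all_boot all_order all_algebra.
From mathcomp Require Import all_classical all_reals all_analysis measurable_realfun.
Import Order.TTheory GRing.Theory Num.Theory.
Local Open Scope classical_set_scope.
Local Open Scope ring_scope.
Set Implicit Arguments. Unset Strict Implicit. Unset Printing Implicit Defensive.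

Section compl.
Local Open Scope ereal_scope.
Context d (T : measurableType d) (R : realType) (mu : {measure set T -> \bar R}).
Let I := caratheodory_type (mu^*)%mu.

Lemma cara_meas (A : set T) : measurable A -> measurable (A : set I).
Proof. move=> mA; exact: caratheodory_measurable_mu_ext. Qed.

Lemma id_meas : measurable_fun [set: I] (fun x : I => (x : T)).
Proof. by move=> _ B mB; rewrite setTI; exact: cara_meas. Qed.

Lemma meas_cara (h : T -> \bar R) : measurable_fun [set: T] h ->
  measurable_fun [set: I] (h : I -> \bar R).
Proof. by move=> mh _ B mB; rewrite setTI; apply: cara_meas; rewrite -[X in measurable X]setTI; exact: mh. Qed.

Lemma compl_int (h : T -> \bar R) : measurable_fun [set: T] h ->
  \int[completion mu]_x h x = \int[mu]_x h x.
Proof.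
move=> mh.
have E : forall g : T -> \bar R, measurable_fun [set: T] g -> (forall x, 0 <= g x) ->
   \int[completion mu]_x g x = \int[mu]_x g x.
  move=> g mg g0.
  have ->: \int[completion mu]_x g x = \int[pushforward (completion mu) (fun x : I => (x : T))]_x g x.
    by rewrite ge0_integral_pushforward//; exact: id_meas.
  apply: eq_measure_integral; first exact: id_meas.
  move=> ? A mA _.
  by transitivity ((mu^*)%mu A); [|exact: measurable_mu_extE].
rewrite [LHS]integralE [RHS]integralE E ?E//.
- exact: measurable_funeneg.
- exact: measurable_funepos.
Qed.

Lemma compl_ae (h1 h2 : T -> \bar R) (N : set T) :
  measurable_fun setT h1 -> measurable N -> mu N = 0 ->
  (forall x, ~ N x -> h2 x = h1 x) ->
  measurable_fun [set: I] (h2 : I -> \bar R) /\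
  \int[completion mu]_x h2 x = \int[mu]_x h1 x.
Proof.
move=> mh1 mN N0 h21.
have mh2 : measurable_fun [set: I] (h2 : I -> \bar R).
  move=> _ B mB; rewrite setTI.
  have -> : h2 @^-1` B = (h1 @^-1` B `\` N) `|` (h2 @^-1` B `&` N).
    apply/seteqP; split => x /=.
      by have [Nx|Nx] := pselect (N x); [right|left; rewrite -h21].
    by move=> [[? Nx]|[]//]; rewrite h21.
  apply: measurableU.
    apply: measurableD; apply: cara_meas => //.
    by rewrite -[X in measurable X]setTI; exact: mh1.
  apply: measure_is_complete_caratheodory; exists N; split.
  - exact: cara_meas.
  - by rewrite -N0; exact: (measurable_mu_extE mu mN).
  - exact: subIsetr.
split => //.
rewrite -(compl_int mh1); apply: ae_eq_integral => //.
  exact: meas_cara.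
exists N; split.
- exact: cara_meas.
- by rewrite /= /completed_measure_extension measurable_mu_extE.
- by move=> x /= Hx; apply: contrapT => Nx; apply: Hx => _; rewrite h21.
Qed.

End compl.


Section bary.
Local Open Scope ereal_scope.
Context d d' (T : measurableType d) (S : measurableType d') (R : realType).
Variables (k : S -> {measure set T -> \bar R}) (nu : {measure set T -> \bar R})
  (p : {measure set S -> \bar R}).
Hypothesis hk : forall U, measurable U -> measurable_fun [set: S] (fun e => k e U).
Hypothesis hp : forall A, measurable A -> nu A = \int[p]_e k e A.

Let bary_indic E (mE : measurable E) :
  \int[nu]_z (\1_E z)%:E = \int[p]_y (\int[k y]_z (\1_E z)%:E).
Proof.
rewrite integral_indic// setIT hp//.
by apply: eq_integral => y _; rewrite integral_indic// setIT.
Qed.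

Import HBNNSimple.

Let bary_nnsfun (f : {nnsfun T >-> R}) :
  \int[nu]_z (f z)%:E = \int[p]_y (\int[k y]_z (f z)%:E).
Proof.
under [in LHS]eq_integral do rewrite fimfunE -fsumEFin//.
rewrite ge0_integral_fsum//; last 2 first.
  - by move=> r; exact/measurable_EFinP/measurableT_comp.
  - by move=> r z _; rewrite EFinM nnfun_muleindic_ge0.
under [in RHS]eq_integral.
  move=> y _.
  under eq_integral.
    by move=> z _; rewrite fimfunE -fsumEFin//; over.
  rewrite /= ge0_integral_fsum//; last 2 first.
    - by move=> r; exact/measurable_EFinP/measurableT_comp.
    - by move=> r z _; rewrite EFinM nnfun_muleindic_ge0.
  under eq_fsbigr.
    move=> r _.
    rewrite (integralZl_indic _ (fun r => f @^-1` [set r]))//; last first.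
      by move=> r0; rewrite preimage_nnfun0.
    rewrite integral_indic// setIT.
    over.
  over.
rewrite /= ge0_integral_fsum//; last 2 first.
  - move=> r; apply: measurable_funeM.
    exact: hk.
  - move=> n y _.
    have := mulemu_ge0 (fun n => f @^-1` [set n]).
    by apply; exact: preimage_nnfun0.
apply: eq_fsbigr => r _.
rewrite (integralZl_indic _ (fun r => f @^-1` [set r]))//; last first.
  exact: preimage_nnfun0.
rewrite /= bary_indic//.
have [r0|r0] := leP 0%R r.
  rewrite ge0_integralZl//.
    by under eq_integral do rewrite integral_indic// setIT.
  exact: hk.
rewrite integral0_eq ?mule0.
  by rewrite integral0_eq// => y _; rewrite preimage_nnfun0// measure0 mule0.
by move=> y _; rewrite integral0_eq// => z _; rewrite preimage_nnfun0// indic0.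
Qed.

Lemma bary f : (forall z, 0 <= f z) -> measurable_fun [set: T] f ->
  \int[nu]_z f z = \int[p]_y (\int[k y]_z f z).
Proof.
move=> f0 mf.
pose f_ := nnsfun_approx measurableT mf.
transitivity (\int[nu]_z (lim ((f_ n z)%:E @[n --> \oo]))).
  by apply/eq_integral => z _; apply/esym/cvg_lim => //=; exact: cvg_nnsfun_approx.
rewrite monotone_convergence//; last 3 first.
  by move=> n; exact/measurable_EFinP.
  by move=> n z _; rewrite lee_fin.
  by move=> z _ a b ab; rewrite lee_fin; exact/lefP/nd_nnsfun_approx.
rewrite (_ : (fun _ => _) =
    (fun n => \int[p]_y (\int[k y]_z (f_ n z)%:E)))//; last first.
  by apply/funext => n; rewrite bary_nnsfun.
transitivity (\int[p]_y lim ((\int[k y]_z (f_ n z)%:E) @[n --> \oo])).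
  rewrite -monotone_convergence//; last 3 first.
  - move=> n; apply: measurable_fun_integral_kernel => //.
    + by move=> z; rewrite lee_fin.
    + exact/measurable_EFinP.
  - by move=> n y _; apply: integral_ge0 => // z _; rewrite lee_fin.
  - move=> y _ a b ab; apply: ge0_le_integral => //.
    + by move=> z _; rewrite lee_fin.
    + exact/measurable_EFinP.
    + exact/measurable_EFinP.
    + by move=> z _; rewrite lee_fin; exact/lefP/nd_nnsfun_approx.
apply: eq_integral => y _; rewrite -monotone_convergence//; last 3 first.
  - by move=> n; exact/measurable_EFinP.
  - by move=> n z _; rewrite lee_fin.
  - by move=> z _ a b ab; rewrite lee_fin; exact/lefP/nd_nnsfun_approx.
by apply: eq_integral => z _; apply/cvg_lim => //; exact: cvg_nnsfun_approx.
Qed.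

End bary.


Lemma mk_ext (R : realType) d (T : measurableType d) (H : set (probability T R))
  (e0 : {nu | ext H nu}) (U : set T) : measurable U ->
  measurable_fun [set: extH_space e0] (fun e : extH_space e0 => (sval e) U).
Proof.
move=> mU _ B mB; apply: sub_gen_smallest.
by exists U => //; exists B.
Qed.

Definition kk (R : realType) d (T : measurableType d) (H : set (probability T R))
  (e0 : {nu | ext H nu}) (e : extH_space e0) : {measure set T -> \bar R} := sval e.


Lemma um_approx (R : realType) (X : ptopologicalType) (f : borel X -> R) (b : R)
  (nu : probability (borel X) R) : universally_measurable_fun f ->
  exists N : set (borel X), [/\ measurable N, nu N = 0%E &
   exists g : borel X -> R, [/\ measurable_fun setT g,
     (forall x, ~ N x -> g x = f x) & (forall x, N x -> g x = b)]].
Proof.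
move=> umf.
have /choice[BC hBC] : forall q : rat, exists BC : set (borel X) * set (borel X),
    [/\ measurable BC.1, measurable BC.2, BC.1 `<=` f @^-1` `]-oo, ratr q[,
        f @^-1` `]-oo, ratr q[ `<=` BC.2 & nu (BC.2 `\` BC.1) = 0%E].
  move=> q; have [B [C [mB mC BA AC nuCB]]] := umf _ (measurable_itv `]-oo, ratr q[) nu.
  by exists (B, C).
pose qn (n : nat) : rat := odflt 0 (unpickle n).
pose N := \bigcup_n ((BC (qn n)).2 `\` (BC (qn n)).1).
have mN : measurable N.
  apply: bigcupT_measurable => n; have [? ? _ _ _] := hBC (qn n).
  exact: measurableD.
have NP q x : ~ N x -> (BC q).1 x <-> f x < ratr q.
  move=> Nx; have [_ _ BA AC _] := hBC q; split => [/BA/=|fx].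
    by rewrite in_itv.
  apply: contrapT => Bx; apply: Nx; exists (pickle q) => //.
  rewrite /qn pickleK /=; split => //; apply: AC => /=.
  by rewrite in_itv.
exists N; split => //.
  apply/eqP; rewrite -measure_le0.
  have [M [mM M0 NM]] : nu.-negligible N.
    apply: negligible_bigcup => n; have [? ? _ _ nu0] := hBC (qn n).
    by exists ((BC (qn n)).2 `\` (BC (qn n)).1); split => //; exact: measurableD.
  by rewrite -M0 le_measure// inE.
exists (fun x => if x \in N then b else f x); split; last 2 first.
- by move=> x Nx; rewrite ifF//; apply/negbTE; rewrite notin_setE.
- by move=> x Nx; rewrite ifT// inE.
apply: (measurability _ (RGenInftyO.measurableE R)) => //.
move=> _ [_ [r ->] <-]; rewrite setTI.
have -> : (fun x => if x \in N then b else f x) @^-1` `]-oo, r[ =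
   ((\bigcup_(q : rat) (if ratr q < r then (BC q).1 else set0)) `\` N) `|`
   (if b < r then N else set0).
  apply/seteqP; split => x /=.
    rewrite in_itv /=; case: ifPn => [/set_mem Nx br|/negP Nx fxr].
      by right; rewrite br.
    have Nx' : ~ N x by move=> ?; apply: Nx; exact/mem_set.
    left; split => //.
    have [q /andP[fq qr]] : exists q : rat, (f x < ratr q) && (ratr q < r).
      by have [q] := rat_in_itvoo fxr; rewrite in_itv /=; exists q.
    exists q => //; rewrite qr; exact/(NP q x Nx').2.
  rewrite in_itv /=; move=> [[[q _]]|].
    case: ifPn => // qr Bq Nx; rewrite ifF; last by apply/negbTE; rewrite notin_setE.
    by apply: lt_trans qr; exact/(NP q x Nx).1.
  by case: ifPn => // br Nx; rewrite ifT//; exact/mem_set.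
apply: measurableU; last by case: ifP.
apply: measurableD => //; apply: bigcupT_measurable_rat => q.
by case: ifP => //; have [] := hBC q.
Qed.


Lemma finNNy (R : realType) (x : \bar R) : x \is a fin_num -> (- x != -oo)%E.
Proof. by rewrite -fin_numN => /fin_numP[]. Qed.

Section LB.
Local Open Scope ereal_scope.
Context d (S : measurableType d) (R : realType) (p : probability S R).

Lemma int_bnd (v : S -> \bar R) (c : R) : (forall x, 0 <= v x) -> measurable_fun setT v ->
  (forall x, v x <= c%:E) -> \int[p]_x v x <= c%:E.
Proof.
move=> v0 mv vc.
have : \int[p]_x v x <= \int[p]_x (cst c%:E) x.
  apply: ge0_le_integral => //.

move=> H; apply: le_trans H _; rewrite integral_cst// (_ : _ [set: S] = 1) ?mule1 //; exact: probability_setT.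
Qed.

Lemma int_bnd_integrable (v : S -> \bar R) (c : R) : (forall x, 0 <= v x) -> measurable_fun setT v ->
  (forall x, v x <= c%:E) -> p.-integrable setT v.
Proof.
move=> v0 mv vc; apply/integrableP; split => //.
under eq_integral do rewrite gee0_abs//.
by apply: le_lt_trans (int_bnd v0 mv vc) _; rewrite ltry.
Qed.

Lemma LB1 (u v : S -> \bar R) (c : R) :
  (forall x, 0 <= u x) -> measurable_fun setT u ->
  (forall x, 0 <= v x) -> measurable_fun setT v ->
  (forall x, v x <= c%:E) ->
  \int[p]_x (u x - v x) = \int[p]_x u x - \int[p]_x v x.
Proof.
move=> u0 mu v0 mv vc.
have iv := int_bnd_integrable v0 mv vc.
have vfin : \int[p]_x v x \is a fin_num.
  by rewrite ge0_fin_numE ?integral_ge0// (le_lt_trans (int_bnd v0 mv vc)) ?ltry.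
have vxfin x : v x \is a fin_num.
  by rewrite ge0_fin_numE// (le_lt_trans (vc x)) ?ltry.
have [ufin|] := ltP (\int[p]_x u x) +oo.
  have iu : p.-integrable setT u.
    apply/integrableP; split => //.
    by under eq_integral do rewrite gee0_abs//.
  exact: (integralB _ iu iv).
rewrite leye_eq => /eqP uoo.
have muv : measurable_fun setT (fun x => u x - v x) by exact: emeasurable_funB.
rewrite uoo [LHS]integralE.
have mw := measurable_funepos muv.
have -> : \int[p]_x (fun x => u x - v x)^\+ x = +oo.
  have : \int[p]_x u x <= \int[p]_x ((fun x => u x - v x)^\+ x + v x).
    apply: ge0_le_integral => //.
      exact: emeasurable_funD.
    move=> x _; rewrite funeposE -{1}(subeK (u x) (vxfin x)) leeD2rE ?vxfin //.
    by rewrite le_max lexx.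
  rewrite ge0_integralD// uoo leye_eq => /eqP h.
  have := addeK (\int[p]_x (fun x => u x - v x)^\+ x) vfin.
  by rewrite h addye ?finNNy// => <-.
have : \int[p]_x (fun x => u x - v x)^\- x \is a fin_num.
  rewrite ge0_fin_numE ?integral_ge0//.
  apply: le_lt_trans (int_bnd (c := c) _ _ _) _ => //.
  - exact: measurable_funeneg.
  - move=> x; rewrite funenegE ge_max (le_trans (v0 x) (vc x)) andbT.
    apply: le_trans (vc x).
    by rewrite leeNl leeBrDr ?vxfin // addeC subee.
  - by rewrite ltry.
by move=> h; rewrite !addye// finNNy.
Qed.

Lemma LB2 (u v : S -> \bar R) (c : R) :
  (forall x, 0 <= u x) -> measurable_fun setT u ->
  (forall x, 0 <= v x) -> measurable_fun setT v ->
  (forall x, u x <= c%:E) ->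
  \int[p]_x (u x - v x) = \int[p]_x u x - \int[p]_x v x.
Proof.
move=> u0 mu v0 mv uc.
have uxfin x : u x \is a fin_num.
  by rewrite ge0_fin_numE// (le_lt_trans (uc x)) ?ltry.
have ufin : \int[p]_x u x \is a fin_num.
  by rewrite ge0_fin_numE ?integral_ge0// (le_lt_trans (int_bnd u0 mu uc)) ?ltry.
have muv : measurable_fun setT (fun x => v x - u x) by exact: emeasurable_funB.
have nfin : \int[p]_x (fun x => v x - u x)^\- x \is a fin_num.
  rewrite ge0_fin_numE ?integral_ge0//.
  apply: le_lt_trans (int_bnd (c := c) _ _ _) _ => //.
  - exact: measurable_funeneg.
  - move=> x; rewrite funenegE ge_max (le_trans (u0 x) (uc x)) andbT.
    apply: le_trans (uc x).
    by rewrite leeNl leeBrDr ?uxfin // addeC subee.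
  - by rewrite ltry.
transitivity (\int[p]_x - (v x - u x)).
  by apply: eq_integral => x _; rewrite fin_num_oppeB// addeC.
rewrite integralN; last by apply: fin_num_adde_defl; rewrite fin_numN.
by rewrite (LB1 v0 mv u0 mu uc) fin_num_oppeB// addeC.
Qed.

End LB.

Unset Implicit Arguments.

Theorem lemma9p9 (R : realType) (X : ptopologicalType) (n : nat)
  (fs : 'I_n -> borel X -> R) (c : 'I_n -> R) (f : borel X -> R) :
  suslin R X ->
  (forall i, measurable_fun setT (fs i)) ->
  semibounded f ->
  universally_measurable_fun f ->
  measure_affine (Hset fs c)
    (fun nu => \int[completion nu]_x (f x)%:E)%E.
Proof.
move=> _ _ sbf umf nu _ e0 p hp.
have [b bf] : exists b : R, (forall x, f x <= b) \/ (forall x, b <= f x).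
  by case: sbf => -[b hb]; exists b; [left|right].
have [N [mN nuN0 [g [mg gf gb]]]] := um_approx b nu umf.
have gbnd : (forall x, g x <= b) \/ (forall x, b <= g x).
  case: bf => hb; [left|right] => x; have [Nx|Nx] := pselect (N x).
  - by rewrite (gb x Nx).
  - by rewrite (gf x Nx).
  - by rewrite (gb x Nx).
  - by rewrite (gf x Nx).
pose S := extH_space e0.
pose k := @kk R _ _ (Hset fs c) e0.
have hk : forall U, measurable U -> measurable_fun [set: S] (fun e => k e U).
  exact: mk_ext.
pose ge := fun x => (g x)%:E.
have mge : measurable_fun setT ge by exact/measurable_EFinP.
have hp' : forall A, measurable A -> (nu : {measure set _ -> \bar R}) A = (\int[p]_e k e A)%E.
  exact: hp.
have bar := bary hk hp'.
have [Z [mZ pZ0 hZ]] : exists Z : set S,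
    [/\ measurable Z, p Z = 0%E & forall e, ~ Z e -> k e N = 0%E].
  have : ae_eq p setT (fun e => k e N) (cst 0%R).
    apply/(ae_eq_integral_abs p measurableT (hk N mN)).
    under eq_integral do rewrite gee0_abs//.
    by rewrite -hp'.
  case => Z [mZ pZ0 sZ]; exists Z; split => // e Ze.
  apply: contrapT => ne; apply: Ze; apply: sZ => /= h; apply: ne; exact: h.
have Fe : forall e : S, ~ Z e ->
    (\int[completion (sval e)]_x (f x)%:E = \int[k e]_x ge x)%E.
  move=> e Ze.
  have h21 : forall x, ~ N x -> (f x)%:E = ge x by move=> x Nx; rewrite /ge gf.
  by have [_ ->] := @compl_ae _ _ R (k e) ge (fun x => (f x)%:E) N mge mN (hZ e Ze) h21.
have Fnu : (\int[completion nu]_x (f x)%:E = \int[nu]_x ge x)%E.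
  have h21 : forall x, ~ N x -> (f x)%:E = ge x by move=> x Nx; rewrite /ge gf.
  by have [_ ->] := @compl_ae _ _ R nu ge (fun x => (f x)%:E) N mge mN nuN0 h21.
pose G1 e := (\int[k e]_x ge^\+ x)%E.
pose G2 e := (\int[k e]_x ge^\- x)%E.
have mG1 : measurable_fun setT G1.
  apply: measurable_fun_integral_kernel => //; try exact: measurable_funepos;
  try by move=> x; rewrite funeposE le_max lexx orbT.
have mG2 : measurable_fun setT G2.
  apply: measurable_fun_integral_kernel => //; try exact: measurable_funeneg;
  try by move=> x; rewrite funenegE le_max lexx orbT.
have G10 e : (0 <= G1 e)%E by apply: integral_ge0 => x _; rewrite funeposE le_max lexx orbT.
have G20 e : (0 <= G2 e)%E by apply: integral_ge0 => x _; rewrite funenegE le_max lexx orbT.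
pose G e := (G1 e - G2 e)%E.
have hG e : (\int[k e]_x ge x)%E = G e by rewrite [LHS]integralE.
have mG : measurable_fun setT G by exact: emeasurable_funB.
have bar1 : (\int[nu]_x ge^\+ x = \int[p]_e G1 e)%E.
  apply: bar; try exact: measurable_funepos;
  try by move=> x; rewrite funeposE le_max lexx orbT.
have bar2 : (\int[nu]_x ge^\- x = \int[p]_e G2 e)%E.
  apply: bar; try exact: measurable_funeneg;
  try by move=> x; rewrite funenegE le_max lexx orbT.
have hFG : forall e, ~ Z e -> (\int[completion (sval e)]_x (f x)%:E)%E = G e.
  by move=> e Ze; rewrite Fe// hG.
have [mF intF] := @compl_ae _ _ R p G _ Z mG mZ pZ0 hFG.
have bnd : (forall e, G1 e <= `|b|%:E)%E \/ (forall e, G2 e <= `|b|%:E)%E.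
  case: gbnd => hb; [left|right] => e; apply: (int_bnd (sval e)).
  - by move=> x; rewrite funeposE le_max lexx orbT.
  - exact: measurable_funepos.
  - move=> x; rewrite funeposE ge_max !lee_fin normr_ge0 andbT.
    exact: le_trans (hb x) (ler_norm b).
  - by move=> x; rewrite funenegE le_max lexx orbT.
  - exact: measurable_funeneg.
  - move=> x; rewrite funenegE ge_max /ge -EFinN !lee_fin normr_ge0 andbT.
    by rewrite lerNl; apply: le_trans (hb x); rewrite lerNl -normrN ler_norm.
have intG : (\int[p]_e G e = \int[nu]_x ge x)%E.
  rewrite [RHS]integralE bar1 bar2.
  case: bnd => hb.
  - exact: (LB2 p (c := `|b|) G10 mG1 G20 mG2 hb).
  - exact: (LB1 p (c := `|b|) G10 mG1 G20 mG2 hb).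
split; last by rewrite Fnu intF intG.
split => //.
case: bnd => hb; [left|right].
- have hFGp : forall e, ~ Z e ->
      ((fun e : S => \int[completion (sval e)]_x (f x)%:E)^\+ e = G^\+ e)%E.
    by move=> e Ze; rewrite !funeposE hFG.
  have [_ ->] := @compl_ae _ _ R p (G^\+)%E _ Z (measurable_funepos mG) mZ pZ0 hFGp.
  apply: le_lt_trans (int_bnd p (c := `|b|) _ (measurable_funepos mG) _) _.
  + by move=> x; rewrite funeposE le_max lexx orbT.
  + move=> e; rewrite funeposE ge_max lee_fin normr_ge0 andbT.
    apply: le_trans (hb e); rewrite /G.
    by rewrite -[leRHS]sube0; apply: leeB.
  + by rewrite ltry.
- have hFGp : forall e, ~ Z e ->
      ((fun e : S => \int[completion (sval e)]_x (f x)%:E)^\- e = G^\- e)%E.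
    by move=> e Ze; rewrite !funenegE hFG.
  have [_ ->] := @compl_ae _ _ R p (G^\-)%E _ Z (measurable_funeneg mG) mZ pZ0 hFGp.
  apply: le_lt_trans (int_bnd p (c := `|b|) _ (measurable_funeneg mG) _) _.
  + by move=> x; rewrite funenegE le_max lexx orbT.
  + move=> e; rewrite funenegE ge_max lee_fin normr_ge0 andbT.
    apply: le_trans (hb e); rewrite /G.
    have G2fin : G2 e \is a fin_num.
      by rewrite ge0_fin_numE// (le_lt_trans (hb e)) ?ltry.
    rewrite fin_num_oppeB// -[leRHS]add0e; apply: leeD2r.
    by rewrite oppe_le0.
  + by rewrite ltry.
Qed.
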